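(* Let $X$, $Y$ be Hilbert spaces, and let $E_0\in L(X)$ be self-adjoint, nonnegative and with closed range. Let $A_0:X\supset{\rm dom}\,A_0\to X$ be linear and let $\Gamma\in L({\rm dom}\,A_0,Y)$ be surjective, where ${\rm dom}\,A_0$ is equipped with the graph norm $\|x\|_{{\rm dom}\,A_0}=(\|x\|_X^2+\|A_0x\|_X^2)^{1/2}$. Assume that there exists $\omega\in\mathbb{R}$ such that ${\rm Re}\,((A_0-\omega E_0)x,x)_X\le0$ for all $x\in\ker\Gamma$, and some $\lambda_0>\omega$ such that $\lambda_0E_0-A_0|_{\ker\Gamma}:\ker\Gamma\to X$ is surjective. Moreover assume $\ker E_0\cap\ker A_0\cap\ker\Gamma=\{0\}$. Let $Z=X\times Y$ and define $E\in L(X,Z)$ and $A:X\supset{\rm dom}\,A_0\to Z$ by $Ex=(E_0x,0)$, $Ax=(A_0x,\Gamma x)$. Then $(\omega,\infty)\subseteq\rho(E,A)$ and the left resolvent $R_l(\lambda)=E(A-\lambda E)^{-1}$ fulfills condition $\mathbf{(D_2)}$. If moreover $\ker E_0=\{0\}$, then the right resolvent $R_r(\lambda)=(A-\lambda E)^{-1}E$ fulfills condition $\mathbf{(D_1)}$.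
   Context: $\rho(E,A)=\{\lambda\in\mathbb{C}:\lambda E-A:{\rm dom}\,A\to Z\text{ bijective}\}$; $R_l$ (with values in $L(Z)$) and $R_r$ (with values in $L(X)$) are pseudo-resolvents on $\Omega=\rho(E,A)$, i.e. $\frac{R(\lambda)-R(\mu)}{\mu-\lambda}=R(\lambda)R(\mu)$ for $\lambda\ne\mu$. Condition $\mathbf{(D_k)}$ for a pseudo-resolvent $R:\Omega\to L(V)$ on a Banach space $V$ ($k\ge1$): there exist $\omega'\in\mathbb{R}$, $M>0$ with $[\omega',\infty)\subseteq\Omega$ and $\|R(\lambda)v\|\le\frac{M}{\lambda-\omega'}\|v\|$ for all $\lambda\in(\omega',\infty)$ and $v\in{\rm ran}\,R(\omega')^{k-1}$ (with ${\rm ran}\,R(\omega')^0=V$). *)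

(* Defs.v *)
From mathcomp Require Import all_boot all_algebra.
From mathcomp Require Import reals.
From mathcomp Require Export complex.
Import GRing.Theory Num.Theory.
Set Implicit Arguments. Unset Strict Implicit. Unset Printing Implicit Defensive.
Local Open Scope ring_scope.
Local Open Scope complex_scope.

Section Defs.
Variable R : realType.
Local Notation C := R[i].

Section Hilbert.
Variable X : lmodType C.
Variable ip : X -> X -> C.

Definition hnorm (x : X) : R := Num.sqrt (complex.Re (ip x x)).

Definition is_hilbert : Prop :=
  [/\ (forall (a : C) (x y z : X), ip (a *: x + y) z = a * ip x z + ip y z),
      (forall x y : X, ip x y = (ip y x)^*),
      (forall x : X, 0 <= ip x x),
      (forall x : X, ip x x = 0 -> x = 0) &
      (forall u : nat -> X,
         (forall e : R, 0 < e -> exists N, forall m n, (N <= m)%N -> (N <= n)%N ->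
             hnorm (u m - u n) < e) ->
         exists l : X, forall e : R, 0 < e -> exists N, forall n, (N <= n)%N ->
             hnorm (u n - l) < e)].

Definition hclosed (S : X -> Prop) : Prop :=
  forall (u : nat -> X) (l : X), (forall n, S (u n)) ->
    (forall e : R, 0 < e -> exists N, forall n, (N <= n)%N -> hnorm (u n - l) < e) ->
    S l.
End Hilbert.

Definition subspace (X : lmodType C) (D : X -> Prop) : Prop :=
  D 0 /\ forall (a : C) (x y : X), D x -> D y -> D (a *: x + y).

Definition linear_on (X Y : lmodType C) (D : X -> Prop) (f : X -> Y) : Prop :=
  forall (a : C) (x y : X), D x -> D y -> f (a *: x + y) = a *: f x + f y.

Definition znorm (X Y : lmodType C) (ipX : X -> X -> C) (ipY : Y -> Y -> C)
  (z : X * Y) : R := Num.sqrt (hnorm ipX z.1 ^+ 2 + hnorm ipY z.2 ^+ 2).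

Definition in_rho (X Z : lmodType C) (D : X -> Prop) (E A : X -> Z) (l : C) : Prop :=
  (forall z : Z, exists x, D x /\ l *: E x - A x = z) /\
  (forall x1 x2, D x1 -> D x2 -> l *: E x1 - A x1 = l *: E x2 - A x2 -> x1 = x2).

(** Graph of the left resolvent R_l(l) = E (A - l E)^{-1} : Z -> Z
    (a function on Z whenever l \in rho(E,A)). *)
Definition Rl_graph (X Z : lmodType C) (D : X -> Prop) (E A : X -> Z) (l : C)
  (z w : Z) : Prop :=
  exists x, [/\ D x, A x - l *: E x = z & w = E x].

(** Graph of the right resolvent R_r(l) = (A - l E)^{-1} E : X -> X. *)
Definition Rr_graph (X Z : lmodType C) (D : X -> Prop) (E A : X -> Z) (l : C)
  (v w : X) : Prop :=
  D w /\ A w - l *: E w = E v.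

Fixpoint in_ran_pow (V : Type) (T : V -> V -> Prop) (k : nat) (v : V) : Prop :=
  match k with
  | 0 => True
  | k'.+1 => exists u, in_ran_pow T k' u /\ T u v
  end.

Definition cond_D (V : Type) (nv : V -> R) (Omega : C -> Prop)
  (Rg : C -> V -> V -> Prop) (k : nat) : Prop :=
  exists (w' M : R), 0 < M /\
    (forall l : R, w' <= l -> Omega l%:C) /\
    (forall l : R, w' < l -> forall v, in_ran_pow (Rg w'%:C) k.-1 v ->
       forall w, Rg l%:C v w -> nv w <= M / (l - w') * nv v).

End Defs.

(* Main.v *)
Require Import Defs.
From mathcomp Require Import all_boot all_order all_algebra.
From mathcomp Require Import reals complex boolp classical_sets.
From mathcomp Require Import ring lra.
Import GRing.Theory Num.Theory Order.TTheory.
Set Implicit Arguments. Unset Strict Implicit. Unset Printing Implicit Defensive.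
Local Open Scope ring_scope.
Local Open Scope complex_scope.


Section Form.
Variable R : realType.
Local Notation C := R[i].
Variable X : lmodType C.
Variable f : X -> X -> C.
Hypothesis fl : forall (a : C) (x y z : X), f (a *: x + y) z = a * f x z + f y z.
Hypothesis fh : forall x y : X, f x y = (f y x)^*.
Hypothesis fp : forall x : X, 0 <= f x x.
#[local] Set Default Proof Using "All".

Definition rf x y := complex.Re (f x y).
Definition qf x := complex.Re (f x x).
Definition nf x := Num.sqrt (qf x).

Lemma ReJ (c : C) : complex.Re (c^*) = complex.Re c. Proof. by case: c. Qed.
Lemma ReM_real (t : R) (c : C) : complex.Re (t%:C * c) = t * complex.Re c.
Proof. by case: c => a b /=; rewrite mul0r subr0. Qed.

Lemma ReD (a b : C) : complex.Re (a + b) = complex.Re a + complex.Re b.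
Proof. by case: a; case: b. Qed.
Lemma ReN (a : C) : complex.Re (- a) = - complex.Re a.
Proof. by case: a. Qed.
Lemma ReB (a b : C) : complex.Re (a - b) = complex.Re a - complex.Re b.
Proof. by rewrite ReD ReN. Qed.
Lemma fDl x y z : f (x + y) z = f x z + f y z.
Proof. by rewrite -{1}[x]scale1r fl mul1r. Qed.
Lemma f0l z : f 0 z = 0.
Proof. have h := fDl 0 0 z; rewrite addr0 in h. by apply: (addrI (f 0 z)); rewrite -h addr0. Qed.
Lemma fZl a x z : f (a *: x) z = a * f x z.
Proof. by rewrite -[a *: x]addr0 fl f0l addr0. Qed.
Lemma fNl x z : f (- x) z = - f x z.
Proof. by rewrite -scaleN1r fZl mulN1r. Qed.
Lemma fBl x y z : f (x - y) z = f x z - f y z.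
Proof. by rewrite fDl fNl. Qed.

Lemma rf_sym x y : rf x y = rf y x.
Proof. by rewrite /rf fh ReJ. Qed.
Lemma rfDl x y z : rf (x + y) z = rf x z + rf y z.
Proof. by rewrite /rf fDl ReD. Qed.
Lemma rfZl (t : R) x z : rf (t%:C *: x) z = t * rf x z.
Proof. by rewrite /rf fZl ReM_real. Qed.
Lemma rfNl x z : rf (- x) z = - rf x z.
Proof. by rewrite /rf fNl ReN. Qed.
Lemma rfBl x y z : rf (x - y) z = rf x z - rf y z.
Proof. by rewrite /rf fBl ReB. Qed.
Lemma rfDr x y z : rf z (x + y) = rf z x + rf z y.
Proof. by rewrite rf_sym rfDl !(rf_sym _ z). Qed.
Lemma rfZr (t : R) x z : rf z (t%:C *: x) = t * rf z x.
Proof. by rewrite rf_sym rfZl rf_sym. Qed.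
Lemma rfNr x z : rf z (- x) = - rf z x.
Proof. by rewrite rf_sym rfNl rf_sym. Qed.
Lemma rfBr x y z : rf z (x - y) = rf z x - rf z y.
Proof. by rewrite rf_sym rfBl !(rf_sym _ z). Qed.
Lemma rf0l z : rf 0 z = 0. Proof. by rewrite /rf f0l. Qed.
Lemma rf0r z : rf z 0 = 0. Proof. by rewrite rf_sym rf0l. Qed.

Lemma qf_ge0 x : 0 <= qf x.
Proof. by have := fp x; rewrite lecE => /andP[_]. Qed.
Lemma fxxE x : f x x = (qf x)%:C.
Proof.
have := fp x; rewrite lecE /qf => /andP[/eqP H _].
by case: (f x x) H => a b /= ->.
Qed.
Lemma qfE x : qf x = rf x x. Proof. by []. Qed.

Lemma qfD x y : qf (x + y) = qf x + 2 * rf x y + qf y.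
Proof.
rewrite !qfE rfDl !rfDr (rf_sym y x); ring.
Qed.
Lemma qfZ (t : R) x : qf (t%:C *: x) = t ^+ 2 * qf x.
Proof. by rewrite !qfE rfZl rfZr mulrA expr2. Qed.
Lemma qfN x : qf (- x) = qf x.
Proof. by rewrite !qfE rfNl rfNr opprK. Qed.
Lemma qf0 : qf 0 = 0. Proof. by rewrite qfE rf0l. Qed.

Lemma CS x y : rf x y ^+ 2 <= qf x * qf y.
Proof.
have H : forall t : R, 0 <= qf x + 2 * t * rf x y + t ^+ 2 * qf y.
  move=> t; have := qf_ge0 (x + t%:C *: y).
  by rewrite qfD qfZ rfZr mulrA.
have [qy0|qypos] := eqVneq (qf y) 0.
  suff -> : rf x y = 0 by rewrite expr0n /= qy0 mulr0.
  apply/eqP; apply: contraT => nz.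
  have := H (- (qf x + 1) / (2 * rf x y)).
  have -> : 2 * (- (qf x + 1) / (2 * rf x y)) * rf x y = - (qf x + 1).
    by field; rewrite nz /= ?pnatr_eq0.
  by rewrite qy0 mulr0 addr0 opprD addrA subrr add0r ler0N1.
have qyp : 0 < qf y by rewrite lt_def qypos qf_ge0.
have := H (- rf x y / qf y).
have -> : qf x + 2 * (- rf x y / qf y) * rf x y + (- rf x y / qf y) ^+ 2 * qf y
  = qf x - rf x y ^+ 2 / qf y.
  by field; rewrite qypos.
rewrite subr_ge0 ler_pdivrMr //.
Qed.

Lemma nf_ge0 x : 0 <= nf x. Proof. exact: sqrtr_ge0. Qed.
Lemma nf_sq x : nf x ^+ 2 = qf x. Proof. by rewrite sqr_sqrtr // qf_ge0. Qed.

Lemma CSabs x y : `|rf x y| <= nf x * nf y.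
Proof.
rewrite -(ler_pXn2r (_ : 0 < 2)%N) ?nnegrE ?mulr_ge0 ?nf_ge0 //.
by rewrite real_normK ?num_real // exprMn !nf_sq CS.
Qed.
Lemma CSle x y : rf x y <= nf x * nf y.
Proof. exact: le_trans (ler_norm _) (CSabs x y). Qed.

Lemma nf_triangle x y : nf (x + y) <= nf x + nf y.
Proof.
rewrite -(ler_pXn2r (_ : 0 < 2)%N) ?nnegrE ?addr_ge0 ?nf_ge0 //.
rewrite nf_sq qfD sqrrD !nf_sq -mulr_natl.
have := CSle x y; set a := rf x y; set b := nf x * nf y; lra.
Qed.
Lemma nfZ (t : R) x : nf (t%:C *: x) = `|t| * nf x.
Proof. by rewrite /nf qfZ sqrtrM ?sqr_ge0 // sqrtr_sqr. Qed.
Lemma nfN x : nf (- x) = nf x. Proof. by rewrite /nf qfN. Qed.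
Lemma nf0 : nf 0 = 0. Proof. by rewrite /nf qf0 sqrtr0. Qed.
Lemma nfB x y : nf (x - y) = nf (y - x). Proof. by rewrite -nfN opprB. Qed.
Lemma nf_triangleB x y z : nf (x - z) <= nf (x - y) + nf (y - z).
Proof. have -> : x - z = (x - y) + (y - z) by rewrite addrA subrK. exact: nf_triangle. Qed.
Lemma nf_eq0 x : nf x = 0 -> qf x = 0.
Proof. by move=> h; rewrite -nf_sq h expr0n. Qed.
End Form.


Section Real.
Variable R : realType.

Lemma bernoulli (h : R) n : 0 <= h -> 1 + n%:R * h <= (1 + h) ^+ n.
Proof.
move=> h0; elim: n => [|n IH]; first by rewrite mul0r addr0 expr0.
rewrite exprS; apply: le_trans (_ : (1 + h) * (1 + n%:R * h) <= _).
  rewrite mulrDl mul1r mulrDr mulr1 -natr1 mulrDl mul1r.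
  have : 0 <= h * (n%:R * h) by rewrite !mulr_ge0.
  lra.
by rewrite ler_pM2l // ?ltr_wpDr.
Qed.

Lemma pow_small (q e : R) : 0 <= q -> q < 1 -> 0 < e ->
  exists N, forall n, (N <= n)%N -> q ^+ n < e.
Proof.
move=> q0 q1 e0.
have [->|qn0] := eqVneq q 0.
  by exists 1%N => n n1; rewrite expr0n; case: n n1.
have qp : 0 < q by rewrite lt_def qn0.
set h := q^-1 - 1.
have hp : 0 < h by rewrite /h subr_gt0 invf_gt1.
exists (Num.Def.archi_bound (e^-1 / h)).+1 => n Hn.
have Hb := archi_boundP (_ : 0 <= e^-1 / h).
have Hb' : e^-1 / h < n%:R.
  apply: lt_le_trans (Hb _) _; first by rewrite divr_ge0 // ltW // invr_gt0.
  by rewrite ler_nat ltnW.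
have qE : q = (1 + h)^-1 by rewrite /h addrC subrK invrK.
rewrite qE exprVn.
have pos : 0 < (1 + h) ^+ n by rewrite exprn_gt0 // ltr_wpDr // ltW.
rewrite -[_^-1]mul1r ltr_pdivrMr //.
have hb := bernoulli n (ltW hp).
rewrite ltr_pdivrMr // in Hb'.
have H1 : 1 < e * (n%:R * h).
  by rewrite -ltr_pdivrMl // mulr1.
have H2 : e * (1 + n%:R * h) <= e * (1 + h) ^+ n by rewrite ler_pM2l.
have : 0 < e by [].
move: H1 H2; nra.
Qed.

Lemma sqrt_le (a b k : R) : 0 <= a -> 0 <= b -> 0 <= k -> a ^+ 2 <= k * b ^+ 2 ->
  a <= Num.sqrt k * b.
Proof.
move=> a0 b0 k0 h.
have -> : a = Num.sqrt (a ^+ 2) by rewrite sqrtr_sqr ger0_norm.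
have -> : b = Num.sqrt (b ^+ 2) by rewrite sqrtr_sqr ger0_norm.
by rewrite -sqrtrM // ler_sqrt // mulr_ge0 // sqr_ge0.
Qed.

Lemma le_of_eps (a b : R) : (forall e, 0 < e -> a <= b + e) -> a <= b.
Proof. by move/ler_addgt0Pr. Qed.
End Real.

Section Conv.
Variable R : realType.
Local Notation C := R[i].
Variable X : lmodType C.
Variable ip : X -> X -> C.
Hypothesis H : is_hilbert ip.
Local Notation nX := (hnorm ip).

Let fl : forall (a : C) (x y z : X), ip (a *: x + y) z = a * ip x z + ip y z.
Proof. by case: H. Qed.
Let fh : forall x y : X, ip x y = (ip y x)^*. Proof. by case: H. Qed.
Let fp : forall x : X, 0 <= ip x x. Proof. by case: H. Qed.

Lemma nX_ge0 x : 0 <= nX x. Proof. exact: nf_ge0. Qed.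
Lemma nX_tri x y : nX (x + y) <= nX x + nX y. Proof. exact: nf_triangle. Qed.
Lemma nX_triB x y z : nX (x - z) <= nX (x - y) + nX (y - z).
Proof. exact: nf_triangleB. Qed.
Lemma nXB x y : nX (x - y) = nX (y - x). Proof. exact: nfB. Qed.
Lemma nXZ (t : R) x : nX (t%:C *: x) = `|t| * nX x. Proof. exact: nfZ. Qed.
Lemma nXN x : nX (- x) = nX x. Proof. exact: nfN. Qed.
Lemma nX0 : nX 0 = 0. Proof. exact: nf0. Qed.
Lemma nX_eq0 x : nX x = 0 -> x = 0.
Proof.
move=> h; case: H => _ _ _ hd _; apply: hd.
by rewrite (fxxE fl fh fp) (nf_eq0 fl fh fp h).
Qed.

Lemma geom_cvg (u : nat -> X) (a q : R) : 0 <= a -> 0 <= q -> q < 1 ->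
  (forall n, nX (u n.+1 - u n) <= a * q ^+ n) ->
  exists l, (forall n, nX (u n - l) <= a * q ^+ n / (1 - q)) /\
            (forall e, 0 < e -> exists N, forall n, (N <= n)%N -> nX (u n - l) < e).
Proof.
move=> a0 q0 q1 hu.
have q1' : 0 < 1 - q by rewrite subr_gt0.
have a1 : 0 < a + 1 by lra.
have Hk : forall n k, nX (u (n + k)%N - u n) <= a * q ^+ n * (1 - q ^+ k) / (1 - q).
  move=> n; elim=> [|k IH].
    by rewrite addn0 subrr nX0 expr0 subrr mulr0 mul0r.
  apply: le_trans (nX_triB _ (u (n + k)%N) _) _.
  rewrite addnS; apply: le_trans (lerD (hu _) IH) _.
  rewrite exprD exprS le_eqVlt; apply/orP; left; apply/eqP; field.
  by rewrite lt0r_neq0.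
have Hb : forall n m, (n <= m)%N -> nX (u m - u n) <= a * q ^+ n / (1 - q).
  move=> n m /subnKC <-; apply: le_trans (Hk _ _) _.
  rewrite ler_pM2r ?invr_gt0 // -[X in _ <= X]mulr1 ler_wpM2l ?mulr_ge0 ?exprn_ge0 //.
  by rewrite gerBl exprn_ge0.
have [l Hl] : exists l, forall e, 0 < e -> exists N, forall n, (N <= n)%N -> nX (u n - l) < e.
  case: H => _ _ _ _ hc; apply: hc => e e0.
  have epos : 0 < e / 2 * (1 - q) / (a + 1).
    by apply: divr_gt0 => //; apply: mulr_gt0 => //; apply: divr_gt0.
  have [N HN] := pow_small q0 q1 epos.
  exists N => m n Hm Hn.
  have key : forall m, (N <= m)%N -> nX (u m - u N) <= a * q ^+ N / (1 - q).
    by move=> m' /Hb.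
  have lt : a * q ^+ N / (1 - q) < e / 2.
    have := HN _ (leqnn N).
    rewrite ltr_pdivlMr // => hq.
    rewrite ltr_pdivrMr //.
    have : 0 <= q ^+ N by rewrite exprn_ge0.
    move: hq; set Q := q ^+ N; nra.
  apply: le_lt_trans (nX_triB _ (u N) _) _.
  rewrite (nXB (u N)).
  have := key _ Hm; have := key _ Hn; lra.
exists l; split => // n.
apply: le_of_eps => e e0.
have [N HN] := Hl e e0.
apply: le_trans (nX_triB _ (u (maxn n N)) _) _.
rewrite nXB; apply: lerD; first by apply: Hb; rewrite leq_maxl.
by apply: ltW; apply: HN; rewrite leq_maxr.
Qed.
End Conv.


Section UBP.
Variable R : realType.
Local Notation C := R[i].
Variable X : lmodType C.
Variable ip : X -> X -> C.
Hypothesis H : is_hilbert ip.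
Local Notation nX := (hnorm ip).

Variable P : X -> Prop.
Hypothesis Pcl : hclosed ip P.
Hypothesis P0 : P 0.
Hypothesis PD : forall x y (t : R), P x -> P y -> P (x + t%:C *: y).
Variable I : Type.
Variable Q : I -> Prop.
Variable phi : I -> X -> R.
Hypothesis philin : forall i x y (t : R), phi i (x + t%:C *: y) = phi i x + t * phi i y.
Hypothesis phib : forall i, Q i -> exists c, forall x, P x -> `|phi i x| <= c * nX x.
Hypothesis phipt : forall x, P x -> exists B, forall i, Q i -> `|phi i x| <= B.

Let phi0 i : phi i 0 = 0.
Proof.
have := philin i 0 0 1; rewrite scale1r addr0 mul1r => h.
by apply: (addrI (phi i 0)); rewrite -h addr0.
Qed.
Let phiZ i x (t : R) : phi i (t%:C *: x) = t * phi i x.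
Proof. by have := philin i 0 x t; rewrite add0r phi0 add0r. Qed.
Let phiDZ i x y (t : R) : phi i (x + t%:C *: y) = phi i x + t * phi i y.
Proof. exact: philin. Qed.
Let PZ x (t : R) : P x -> P (t%:C *: x).
Proof. by move=> Px; have := PD t P0 Px; rewrite add0r. Qed.

Let S i := fun r : R => exists x, [/\ P x, nX x <= 1 & r = `|phi i x|].
Let N i := sup (S i).

Let hasS i : Q i -> has_sup (S i).
Proof.
move=> Qi; have [c Hc] := phib Qi; split.
  by exists 0; exists 0; rewrite nX0 // phi0 normr0; split.
exists `|c| => r [x [Px nx ->]].
apply: le_trans (Hc _ Px) _.
apply: le_trans (ler_norm _) _; rewrite normrM.
by rewrite -[X in _ <= X]mulr1 ler_wpM2l // ger0_norm // nX_ge0.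
Qed.

Let N_ge0 i : Q i -> 0 <= N i.
Proof.
move=> Qi; apply: (sup_upper_bound (hasS Qi)).
by exists 0; rewrite nX0 // phi0 normr0; split.
Qed.

Let Nbound i x : Q i -> P x -> `|phi i x| <= N i * nX x.
Proof.
move=> Qi Px.
have [c Hc] := phib Qi.
have [n0|n0] := eqVneq (nX x) 0.
  by have := Hc _ Px; rewrite n0 !mulr0.
have np : 0 < nX x by rewrite lt_def n0 nX_ge0.
set t := (nX x)^-1.
have : S i `|phi i (t%:C *: x)|.
  exists (t%:C *: x); split => //; first exact: PZ.
  by rewrite nXZ // ger0_norm ?invr_ge0 ?nX_ge0 // mulVf.
move/(sup_upper_bound (hasS Qi)); rewrite -/(N i) phiZ normrM ger0_norm ?invr_ge0 ?nX_ge0 //.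
by rewrite mulrC ler_pdivrMr.
Qed.

Let sokal i x (t : R) : Q i -> P x -> 0 < t ->
  exists x', [/\ P x', nX (x' - x) <= t & 2 / 3 * t * N i <= `|phi i x'|].
Proof.
move=> Qi Px t0.
have [N0|Npos] := eqVneq (N i) 0.
  by exists x; rewrite subrr nX0 // N0 mulr0; split => //; rewrite ltW.
have Np : 0 < N i by rewrite lt_def Npos N_ge0.
have N3 : 0 < N i / 3 by rewrite divr_gt0.
have [r [xi [Pxi nxi ->]] hr] := sup_adherent N3 (hasS Qi).
have hxi : 2 / 3 * N i <= `|phi i xi|.
  by rewrite -/(N i) in hr; apply: ltW; move: hr; lra.
have dist s : (s = 1 \/ s = -1) -> nX (x + (s * t)%:C *: xi - x) <= t.
  move=> hs; rewrite addrC addKr nXZ // normrM (ger0_norm (ltW t0)).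
  have -> : `|s| = 1 by case: hs => ->; rewrite ?normrN normr1.
  by rewrite mul1r -[X in _ <= X]mulr1 ler_wpM2l // ltW.
have [h1|h1] := lerP (t * `|phi i xi|) `|phi i (x + t%:C *: xi)|.
  exists (x + t%:C *: xi); split; first exact: PD.
    by have := dist 1 (or_introl erefl); rewrite mul1r.
  by apply: le_trans h1; have := ler_wpM2l (ltW t0) hxi; lra.
exists (x + (-1 * t)%:C *: xi); split; first exact: PD.
  by apply: dist; right.
rewrite phiDZ.
rewrite phiDZ in h1.
have tri : `|2 * (t * phi i xi)| <= `|phi i x + t * phi i xi| + `|phi i x + -1 * t * phi i xi|.
  rewrite (_ : 2 * (t * phi i xi) = (phi i x + t * phi i xi) - (phi i x + -1 * t * phi i xi)).
    exact: ler_normB.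
  ring.
rewrite normrM (normrM t) (ger0_norm (ltW t0)) normr_nat in tri.
have : 2 / 3 * t * N i <= t * `|phi i xi|.
  by have := ler_wpM2l (ltW t0) hxi; lra.
lra.
Qed.

Lemma UBP_main : exists K, forall i x, Q i -> P x -> `|phi i x| <= K * nX x.
Proof.
apply/not_existsP => HK.
have Hsel : forall n : nat, exists i, Q i /\ 18 * 6 ^+ n < N i.
  move=> n; apply/not_existsP => Hn; apply: (HK (18 * 6 ^+ n)) => i x Qi Px.
  apply: le_trans (Nbound Qi Px) _; rewrite ler_wpM2r ?nX_ge0 //.
  have := Hn i; case: (pselect (Q i)) => // Qi' Hn'.
  by rewrite leNgt; apply/negP => h; apply: Hn'.
have [sel Hs] := choice Hsel.
have Hst : forall p : nat * X, exists x', P p.2 -> [/\ P x', nX (x' - p.2) <= (3^-1) ^+ p.1.+1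
   & 2 / 3 * (3^-1) ^+ p.1.+1 * N (sel p.1) <= `|phi (sel p.1) x'|].
  move=> [n x] /=; case: (pselect (P x)) => [Px|nPx]; last by exists x.
  have t0 : 0 < (3^-1 : R) ^+ n.+1 by rewrite exprn_gt0 // invr_gt0.
  have [x' Hx'] := sokal (proj1 (Hs n)) Px t0.
  by exists x'.
have [stp Hstp] := choice Hst.
pose xs := fix g n := match n with 0%N => 0 | n'.+1 => stp (n', g n') end.
have Pxs : forall n, P (xs n).
  by elim=> [|n IH] //=; case: (Hstp (n, xs n) IH).
have Hxs : forall n, nX (xs n.+1 - xs n) <= 3^-1 * (3^-1) ^+ n.
  by move=> n; rewrite -exprS /=; case: (Hstp (n, xs n) (Pxs n)).
have i3 : (0 : R) <= 3^-1 by rewrite invr_ge0.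
have i31 : (3^-1 : R) < 1 by rewrite invf_lt1 // ltr1n.
have [l [Hl1 Hl2]] := geom_cvg H i3 i3 i31 Hxs.
have Pl : P l := Pcl Pxs Hl2.
have [B HB] := phipt Pl.
set n := Num.Def.archi_bound B.
have Bn : B < 2 ^+ n by apply: upper_nthrootP.
have [Qi Ni] := Hs n.
set i := sel n in Qi Ni.
have [_ _ h1] := Hstp (n, xs n) (Pxs n).
rewrite /= -/i in h1.
have Pd : P (xs n.+1 - l).
  by have := PD (-1) (Pxs n.+1) Pl; rewrite rmorphN1 scaleN1r.
have h2 := Nbound Qi Pd.
have h3 := Hl1 n.+1.
have dec : phi i (xs n.+1) = phi i (xs n.+1 - l) + phi i l.
  by have := philin i (xs n.+1) l (-1); rewrite rmorphN1 scaleN1r => ->; ring.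
have tri : `|phi i (xs n.+1)| <= `|phi i (xs n.+1 - l)| + `|phi i l|.
  by rewrite dec ler_normD.
have HBi := HB i Qi.
have T0 : (0 : R) <= (3^-1) ^+ n by rewrite exprn_ge0 // invr_ge0.
have e6 : (3^-1) ^+ n * 6 ^+ n = 2 ^+ n :> R.
  by rewrite -exprMn; congr (_ ^+ _); field.
have h4 : `|phi i (xs n.+1 - l)| <= N i * (2^-1 * (3^-1 * (3^-1) ^+ n)).
  apply: le_trans h2 _; apply: ler_wpM2l; first exact: (N_ge0 Qi).
  apply: le_trans h3 _; rewrite le_eqVlt; apply/orP; left; apply/eqP.
  by rewrite exprS; field.
rewrite exprS in h1.
have h5 : (3^-1) ^+ n * (18 * 6 ^+ n) <= (3^-1) ^+ n * N i.
  by rewrite ler_wpM2l // ltW.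
rewrite mulrCA e6 in h5.
nra.
Qed.
End UBP.


Section Main.
Variables (R : realType) (X Y : lmodType R[i]) (ipX : X -> X -> R[i]) (ipY : Y -> Y -> R[i])
  (E0 : X -> X) (D : X -> Prop) (A0 : X -> X) (G : X -> Y) (w : R).
Hypothesis HX : is_hilbert ipX.
Hypothesis HE0lin : linear_on (fun _ => True) E0.
Hypothesis HE0b : exists c : R, forall x, hnorm ipX (E0 x) <= c * hnorm ipX x.
Hypothesis HE0sa : forall x y, ipX (E0 x) y = ipX x (E0 y).
Hypothesis HE0pos : forall x, 0 <= ipX (E0 x) x.
Hypothesis HE0cl : hclosed ipX (fun y => exists x, E0 x = y).
Local Notation nX := (hnorm ipX).
Local Notation C := R[i].

Let fl : forall (a : C) (x y z : X), ipX (a *: x + y) z = a * ipX x z + ipX y z.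
Proof. by case: HX. Qed.
Let fh : forall x y : X, ipX x y = (ipX y x)^*. Proof. by case: HX. Qed.
Let fp : forall x : X, 0 <= ipX x x. Proof. by case: HX. Qed.

Lemma E0D x y : E0 (x + y) = E0 x + E0 y.
Proof. by rewrite -{1}[x]scale1r HE0lin // scale1r. Qed.
Lemma E00 : E0 0 = 0.
Proof. have h := E0D 0 0; rewrite addr0 in h. by apply: (addrI (E0 0)); rewrite -h addr0. Qed.
Lemma E0Z a x : E0 (a *: x) = a *: E0 x.
Proof. by rewrite -[a *: x]addr0 HE0lin // E00 addr0. Qed.
Lemma E0N x : E0 (- x) = - E0 x.
Proof. by rewrite -scaleN1r E0Z scaleN1r. Qed.
Lemma E0B x y : E0 (x - y) = E0 x - E0 y.
Proof. by rewrite E0D E0N. Qed.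

Definition fE x y := ipX (E0 x) y.
Let fEl : forall (a : C) (x y z : X), fE (a *: x + y) z = a * fE x z + fE y z.
Proof. by move=> a x y z; rewrite /fE HE0lin // fl. Qed.
Let fEh : forall x y : X, fE x y = (fE y x)^*.
Proof. by move=> x y; rewrite /fE fh HE0sa. Qed.
Let fEp : forall x : X, 0 <= fE x x. Proof. exact: HE0pos. Qed.

Definition pE x := nf fE x.

Lemma pE_ge0 x : 0 <= pE x. Proof. exact: nf_ge0. Qed.
Lemma pE_sq x : pE x ^+ 2 = rf ipX (E0 x) x. Proof. by rewrite /pE nf_sq. Qed.
Lemma pE_CS x y : rf ipX (E0 x) y <= pE x * pE y. Proof. exact: (CSle fEl fEh fEp). Qed.
Lemma pE_tri x y z : pE (x - z) <= pE (x - y) + pE (y - z).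
Proof. exact: (nf_triangleB fEl fEh fEp). Qed.
Lemma pEZ (t : R) x : pE (t%:C *: x) = `|t| * pE x. Proof. exact: (nfZ fEl fEh fEp). Qed.
Lemma pEB x y : pE (x - y) = pE (y - x). Proof. exact: (nfB fEl fEh fEp). Qed.
Lemma pEN x : pE (- x) = pE x. Proof. exact: (nfN fEl fEh fEp). Qed.
Lemma pE0 : pE 0 = 0. Proof. exact: (nf0 fEl fEh fEp). Qed.

Lemma rfX_CSle x y : rf ipX x y <= nX x * nX y. Proof. exact: (CSle fl fh fp). Qed.
Lemma rfX_CSabs x y : `|rf ipX x y| <= nX x * nX y. Proof. exact: (CSabs fl fh fp). Qed.

Lemma Kc : exists c : R, 0 <= c /\ forall x, nX (E0 x) <= c * nX x.
Proof.
case: HE0b => c Hc; exists `|c|; split => // x.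
apply: le_trans (Hc x) _; rewrite ler_wpM2r ?nX_ge0 // ?ler_norm //.
Qed.

Lemma K1 : exists k : R, 0 <= k /\ forall x, nX (E0 x) <= k * pE x.
Proof.
have [c [c0 Hc]] := Kc.
exists (Num.sqrt c); split; first exact: sqrtr_ge0.
move=> x.
have h1 : nX (E0 x) ^+ 2 <= pE x * pE (E0 x).
  by rewrite /hnorm sqr_sqrtr ?(qf_ge0 fl fh fp) //; exact: (pE_CS x (E0 x)).
have h2 : pE (E0 x) ^+ 2 <= c * nX (E0 x) ^+ 2.
  rewrite pE_sq; apply: le_trans (rfX_CSle _ _) _.
  by rewrite expr2 mulrA ler_wpM2r ?nX_ge0.
have [n0|n0] := eqVneq (nX (E0 x)) 0.
  by rewrite n0 mulr_ge0 ?sqrtr_ge0 ?pE_ge0.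
have np : 0 < nX (E0 x) by rewrite lt_def n0 nX_ge0.
have h3 : pE (E0 x) <= Num.sqrt c * nX (E0 x).
  by apply: sqrt_le => //; [exact: pE_ge0 | exact: nX_ge0].
have h4 : nX (E0 x) ^+ 2 <= pE x * (Num.sqrt c * nX (E0 x)).
  by apply: le_trans h1 _; rewrite ler_wpM2l ?pE_ge0.
rewrite expr2 mulrA ler_pM2r // in h4.
by rewrite mulrC.
Qed.

Lemma pE_le : exists k : R, 0 <= k /\ forall x, pE x <= k * nX x.
Proof.
have [c [c0 Hc]] := Kc.
exists (Num.sqrt c); split; first exact: sqrtr_ge0.
move=> x.
have h : pE x ^+ 2 <= c * nX x ^+ 2.
  rewrite pE_sq; apply: le_trans (rfX_CSle _ _) _.
  by rewrite expr2 mulrA ler_wpM2r ?nX_ge0.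
by apply: sqrt_le => //; [exact: pE_ge0 | exact: nX_ge0].
Qed.

Lemma pE_eq0 x : pE x = 0 -> E0 x = 0.
Proof.
move=> h; have [k [k0 Hk]] := K1.
apply: (nX_eq0 HX); apply/eqP; rewrite eq_le nX_ge0 // andbT.
by have := Hk x; rewrite h mulr0.
Qed.

Lemma CR : exists k : R, 0 <= k /\ forall y, pE y <= k * nX (E0 y).
Proof.
pose P := fun y => exists x, E0 x = y.
have P0 : P 0 by exists 0; rewrite E00.
have PD : forall x y (t : R), P x -> P y -> P (x + t%:C *: y).
  by move=> _ _ t [x <-] [y <-]; exists (x + t%:C *: y); rewrite E0D E0Z.
pose phi := fun (y r : X) => rf ipX r y.
have philin : forall i x y (t : R), phi i (x + t%:C *: y) = phi i x + t * phi i y.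
  by move=> i x y t; rewrite /phi (rfDl fl fh fp) (rfZl fl fh fp).
have phib : forall i, (fun y => nX (E0 y) <= 1) i ->
    exists c, forall x, P x -> `|phi i x| <= c * nX x.
  by move=> i _; exists (nX i) => x _; rewrite mulrC rfX_CSabs.
have phipt : forall x, P x -> exists B, forall i, (fun y => nX (E0 y) <= 1) i -> `|phi i x| <= B.
  move=> _ [z <-]; exists (nX z) => i /= hi.
  rewrite /phi /rf HE0sa; apply: le_trans (rfX_CSabs _ _) _.
  by rewrite -[X in _ <= X]mulr1 ler_wpM2l ?nX_ge0.
have [K HK] := UBP_main HX HE0cl P0 PD philin phib phipt.
exists (Num.sqrt K); split; first exact: sqrtr_ge0.
move=> y.
have [n0|n0] := eqVneq (nX (E0 y)) 0.
  have e : E0 y = 0 by apply: (nX_eq0 HX).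
  have : pE y ^+ 2 = 0 by rewrite pE_sq e /rf (f0l fl).
  by move/eqP; rewrite sqrf_eq0 => /eqP ->; rewrite mulr_ge0 ?sqrtr_ge0 ?nX_ge0.
have np : 0 < nX (E0 y) by rewrite lt_def n0 nX_ge0.
set s := nX (E0 y).
set y' := (s^-1)%:C *: y.
have e1 : nX (E0 y') = 1.
  by rewrite /y' E0Z nXZ // ger0_norm ?invr_ge0 ?(ltW np) // mulVf.
have e2 : rf ipX (E0 y') y' = (s^-1) ^+ 2 * pE y ^+ 2.
  by rewrite -pE_sq /y' pEZ exprMn ger0_norm // invr_ge0 ltW.
have hs : nX (E0 y') <= 1 by rewrite e1.
have Pe : P (E0 y') by exists y'.
have := HK _ _ hs Pe.
rewrite /phi e1 mulr1 e2 ger0_norm; last by rewrite mulr_ge0 // sqr_ge0.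
rewrite exprVn ler_pdivrMl ?exprn_gt0 // => h.
have s2 : 0 < s ^+ 2 by rewrite exprn_gt0.
have hK : 0 <= K.
  have p2 : 0 <= pE y ^+ 2 by rewrite sqr_ge0.
  move: h p2 s2; nra.
by apply: sqrt_le => //; [exact: pE_ge0 | exact: ltW | rewrite mulrC].
Qed.

Hypothesis HD : subspace D.
Hypothesis HA0 : linear_on D A0.
Hypothesis HG : linear_on D G.
Hypothesis Hdiss : forall x, D x -> G x = 0 ->
     complex.Re (ipX (A0 x - w%:C *: E0 x) x) <= 0.
Hypothesis Hker : forall x, D x -> E0 x = 0 -> A0 x = 0 -> G x = 0 -> x = 0.

Lemma D0 : D 0. Proof. by case: HD. Qed.
Lemma DL a x y : D x -> D y -> D (a *: x + y). Proof. by case: HD => _; apply. Qed.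
Lemma DD x y : D x -> D y -> D (x + y).
Proof. by move=> *; rewrite -[x]scale1r; apply: DL. Qed.
Lemma DN x : D x -> D (- x).
Proof. by move=> *; rewrite -scaleN1r -[_ *: x]addr0; apply: DL => //; apply: D0. Qed.
Lemma DB x y : D x -> D y -> D (x - y).
Proof. by move=> *; apply: DD => //; apply: DN. Qed.
Lemma DZ a x : D x -> D (a *: x).
Proof. by move=> *; rewrite -[_ *: x]addr0; apply: DL => //; apply: D0. Qed.

Lemma subrACA (V : zmodType) (a b c d : V) : (a - b) - (c - d) = (a - c) - (b - d).
Proof. by rewrite !opprD !opprK addrACA. Qed.

Section LinD.
Variable (Z : lmodType C) (F : X -> Z).
Hypothesis HF : linear_on D F.
Lemma FD x y : D x -> D y -> F (x + y) = F x + F y.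
Proof. by move=> *; rewrite -{1}[x]scale1r HF // scale1r. Qed.
Lemma F0 : F 0 = 0.
Proof.
have h := FD D0 D0; rewrite addr0 in h.
by apply: (addrI (F 0)); rewrite -h addr0.
Qed.
Lemma FZ a x : D x -> F (a *: x) = a *: F x.
Proof. by move=> *; rewrite -[a *: x]addr0 HF //; [rewrite F0 addr0 | apply: D0]. Qed.
Lemma FN x : D x -> F (- x) = - F x.
Proof. by move=> *; rewrite -scaleN1r FZ // scaleN1r. Qed.
Lemma FB x y : D x -> D y -> F (x - y) = F x - F y.
Proof. by move=> *; rewrite FD ?FN //; apply: DN. Qed.
End LinD.

Definition Kset x := D x /\ G x = 0.
Definition L (l : R) x := l%:C *: E0 x - A0 x.

Lemma KB x y : Kset x -> Kset y -> Kset (x - y).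
Proof. by move=> [Dx Gx] [Dy Gy]; split; [apply: DB | rewrite (FB HG) // Gx Gy subrr]. Qed.
Lemma KD x y : Kset x -> Kset y -> Kset (x + y).
Proof. by move=> [Dx Gx] [Dy Gy]; split; [apply: DD | rewrite (FD HG) // Gx Gy addr0]. Qed.

Lemma LB l x y : D x -> D y -> L l (x - y) = L l x - L l y.
Proof. by move=> Dx Dy; rewrite /L (FB HA0) // E0B scalerBr subrACA. Qed.

Lemma LD l x y : D x -> D y -> L l (x + y) = L l x + L l y.
Proof. by move=> Dx Dy; rewrite /L (FD HA0) // E0D scalerDr opprD addrACA. Qed.

Lemma Lshift l l1 x : L l x = L l1 x + (l - l1)%:C *: E0 x.
Proof. by rewrite /L rmorphB scalerBl [in RHS]addrC addrA subrK. Qed.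

Lemma key l x d : w < l -> Kset x -> L l x = E0 d -> (l - w) * pE x <= pE d.
Proof.
move=> wl [Dx Gx] hL.
have hA : A0 x = l%:C *: E0 x - E0 d by rewrite -hL /L opprB addrC subrK.
have h := Hdiss Dx Gx.
have e : A0 x - w%:C *: E0 x = (l - w)%:C *: E0 x - E0 d.
  by rewrite hA rmorphB scalerBl addrAC.
rewrite e -/(rf ipX _ x) (rfBl fl fh fp) (rfZl fl fh fp) -pE_sq in h.
have cs := pE_CS d x.
have px := pE_ge0 x; have pd := pE_ge0 d.
have [p0|p0] := eqVneq (pE x) 0; first by rewrite p0 mulr0.
have pp : 0 < pE x by rewrite lt_def p0 px.
have : (l - w) * pE x * pE x <= pE d * pE x.
  apply: le_trans cs; rewrite -mulrA -expr2; lra.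
by rewrite ler_pM2r.
Qed.


Lemma inj_L l x : w < l -> Kset x -> L l x = 0 -> x = 0.
Proof.
move=> wl Kx hL.
have h := key wl Kx (_ : L l x = E0 0).
rewrite E00 pE0 in h; have {h} h := h hL.
have p0 : pE x = 0.
  apply/eqP; rewrite eq_le pE_ge0 andbT.
  by rewrite -(ler_pM2l (_ : 0 < l - w)) ?subr_gt0 // mulr0.
have e0 := pE_eq0 p0.
case: Kx => Dx Gx; apply: Hker => //.
by move: hL; rewrite /L e0 scaler0 sub0r => /eqP; rewrite oppr_eq0 => /eqP.
Qed.

Definition Surj l := forall z, exists x, Kset x /\ L l x = z.

Lemma step l1 l : w < l1 -> Surj l1 -> `|l - l1| < l1 - w -> Surj l.
Proof.
move=> wl1 S1 hl z.
have [T HT] := choice S1.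
set kap := l1 - w; set mu := l - l1.
have kp : 0 < kap by rewrite subr_gt0.
set q := `|mu| / kap.
have q0 : 0 <= q by rewrite divr_ge0 // ltW.
have q1 : q < 1 by rewrite ltr_pdivrMr // mul1r.
have [k1 [k10 Hk1]] := K1.
have [k2 [k20 Hk2]] := CR.
pose g a := T (z - mu%:C *: E0 a).
have Tdiff : forall a b, pE (g a - g b) <= q * pE (a - b).
  move=> a b.
  have [Ka La] := HT (z - mu%:C *: E0 a).
  have [Kb Lb] := HT (z - mu%:C *: E0 b).
  have e : L l1 (g a - g b) = E0 (mu%:C *: (b - a)).
    rewrite LB; [|by case: Ka|by case: Kb].
    rewrite /g La Lb E0Z E0B scalerBr.
    by rewrite subrACA subrr sub0r opprB.
  have h := key wl1 (KB Ka Kb) e.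
  rewrite pEZ (pEB b) in h.
  by rewrite /q mulrAC ler_pdivlMr // mulrC.
pose xs := fix f n := match n with 0%N => 0 | n'.+1 => g (f n') end.
have Hxs : forall n, pE (xs n.+1 - xs n) <= pE (xs 1%N - xs 0%N) * q ^+ n.
  elim=> [|n IH]; first by rewrite expr0 mulr1.
  apply: le_trans (Tdiff _ _) _.
  by rewrite exprS mulrCA ler_wpM2l.
set a0 := k1 * pE (xs 1%N - xs 0%N).
have a00 : 0 <= a0 by rewrite mulr_ge0 // pE_ge0.
have Hu : forall n, nX (E0 (xs n.+1) - E0 (xs n)) <= a0 * q ^+ n.
  move=> n; rewrite -E0B; apply: le_trans (Hk1 _) _.
  by rewrite /a0 -mulrA ler_wpM2l.
have [l' [Hl1 Hl2]] := geom_cvg HX a00 q0 q1 Hu.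
have [y Hy] : exists y, E0 y = l'.
  by apply: (HE0cl (u := fun n => E0 (xs n))) => // n; exists (xs n).
subst l'.
have q1' : 0 < 1 - q by rewrite subr_gt0.
set Bq := k2 * (a0 / (1 - q)).
have Bq0 : 0 <= Bq by rewrite mulr_ge0 // divr_ge0 // ltW.
have Hpy : forall n, pE (xs n - y) <= Bq * q ^+ n.
  move=> n; apply: le_trans (Hk2 _) _; rewrite E0B /Bq -mulrA ler_wpM2l //.
  by apply: le_trans (Hl1 n) _; rewrite mulrAC.
set xst := g y.
have Hst : forall n, pE (xst - y) <= 2 * Bq * q ^+ n.
  move=> n.
  apply: le_trans (pE_tri _ (xs n.+1) _) _.
  have h1 : pE (xst - xs n.+1) <= q * pE (y - xs n) by apply: Tdiff.
  have h2 := Hpy n.+1.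
  have h3 := Hpy n.
  rewrite pEB in h3.
  rewrite exprS in h2.
  have hq : q * q ^+ n <= q ^+ n.
    by rewrite -[X in _ <= X]mul1r ler_wpM2r ?exprn_ge0 // ltW.
  have : q * pE (y - xs n) <= q * (Bq * q ^+ n) by rewrite ler_wpM2l.
  have : Bq * (q * q ^+ n) <= Bq * q ^+ n by rewrite ler_wpM2l.
  move: h1 h2; set P1 := pE _; set P2 := pE _; set Q := q ^+ n.
  move=> h1 h2 h4 h5.
  have : q * (Bq * Q) = Bq * (q * Q) by ring.
  lra.
have p0 : pE (xst - y) = 0.
  apply/eqP; rewrite eq_le pE_ge0 andbT.
  apply: le_of_eps => e e0; rewrite add0r.
  have e' : 0 < e / (2 * Bq + 1) by rewrite divr_gt0 //; lra.
  have [N HN] := pow_small q0 q1 e'.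
  apply: le_trans (Hst N) _.
  have := HN _ (leqnn N); rewrite ltr_pdivlMr; last by lra.
  move=> h; apply: ltW; apply: le_lt_trans h.
  rewrite mulrC ler_wpM2l ?exprn_ge0 //; lra.
have e0 := pE_eq0 p0; rewrite E0B in e0; move/eqP: e0; rewrite subr_eq0 => /eqP e0.
have [Kst Lst] := HT (z - mu%:C *: E0 y).
exists xst; split => //.
by rewrite (Lshift _ l1) /xst /g Lst -/mu -/xst e0 subrK.
Qed.

Lemma surj_all l0 : w < l0 -> Surj l0 -> forall l, w < l -> Surj l.
Proof.
move=> wl0 S0 l wl.
set k0 := l0 - w.
have k0p : 0 < k0 by rewrite subr_gt0.
pose sn n := w + (3 / 2) ^+ n * k0.
have pn : forall n, 0 < (3 / 2 : R) ^+ n by move=> n; rewrite exprn_gt0 // divr_gt0.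
have Ss : forall n, Surj (sn n).
  elim=> [|n IH]; first by rewrite /sn expr0 mul1r /k0 addrC subrK.
  apply: step IH _; first by rewrite /sn ltrDl mulr_gt0.
  rewrite /sn exprS.
  have := pn n; set P := (3 / 2) ^+ n => hP.
  have -> : w + 3 / 2 * P * k0 - (w + P * k0) = P * k0 / 2 by field.
  have hPk : 0 < P * k0 by rewrite mulr_gt0.
  rewrite ger0_norm; last by rewrite divr_ge0 // ltW.
  lra.
set n := Num.Def.archi_bound ((l - w) / k0).
have hn : (l - w) / k0 < n%:R by apply: archi_boundP; rewrite divr_ge0 // ltW // subr_gt0.
have h12 : (0 : R) <= 1 / 2 by rewrite divr_ge0.
have hb := bernoulli n h12.
have e32 : (1 + 1 / 2 : R) = 3 / 2 by field.
rewrite e32 in hb.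
apply: (step (l1 := sn n)); first by rewrite /sn ltrDl mulr_gt0.
  exact: Ss.
rewrite /sn ltr_norml; apply/andP; split.
  lra.
rewrite ltr_pdivrMr // in hn.
have : n%:R * k0 <= 2 * ((3 / 2) ^+ n * k0) - 2 * k0.
  move: hb k0p; set P := (3 / 2 : R) ^+ n; move=> h k0p; nra.
move: hn; set P := (3 / 2 : R) ^+ n * k0; lra.
Qed.

Lemma nX_sq x : nX x ^+ 2 = qf ipX x. Proof. exact: (nf_sq fl fh fp). Qed.

Lemma paral a b : qf ipX (a - b) + qf ipX (a + b) = 2 * qf ipX a + 2 * qf ipX b.
Proof.
rewrite !(qfD fl fh fp) (qfN fl fh fp) (rfNr fl fh fp); ring.
Qed.

Lemma lt_of_sq (a e : R) : 0 <= a -> 0 < e -> a ^+ 2 < e ^+ 2 -> a < e.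
Proof. by move=> a0 e0; rewrite ltr_pXn2r // ?nnegrE ?ltW. Qed.

Lemma E0_onto : (forall x, E0 x = 0 -> x = 0) -> forall y, exists z, E0 z = y.
Proof.
move=> hk y.
pose S := fun r : R => exists z, r = nX (y - E0 z).
have hS : has_inf S.
  split; first by exists (nX (y - E0 0)); exists 0.
  by exists 0 => r [z ->]; apply: nX_ge0.
set d := inf S.
have dlb : forall z, d <= nX (y - E0 z) by move=> z; apply: (ge_inf hS.2); exists z.
have d0 : 0 <= d by apply: lb_le_inf; [exact: hS.1 | move=> r [z ->]; apply: nX_ge0].
have hmin : forall n : nat, exists z, nX (y - E0 z) < d + n.+1%:R^-1.
  move=> n; have hn : (0 : R) < n.+1%:R^-1 by rewrite invr_gt0 ltr0Sn.
  have [r [z ->] hr] := inf_adherent hn hS.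
  by exists z.
have [zs Hzs] := choice hmin.
set eps := fun n : nat => (n.+1%:R : R)^-1.
have eps0 : forall n, 0 < eps n by move=> n; rewrite invr_gt0 ltr0Sn.
have eps1 : forall n, eps n <= 1 by move=> n; rewrite invf_le1 ?ltr0Sn // ler1n.
have epsle : forall n N, (N <= n)%N -> eps n <= eps N.
  by move=> n N h; rewrite /eps lef_pV2 ?ler_nat ?posrE ?ltr0Sn.
have mid : forall n m, (y - E0 (zs n)) + (y - E0 (zs m)) =
    (2 : R)%:C *: (y - E0 ((2^-1 : R)%:C *: (zs n + zs m))).
  move=> n m; rewrite E0Z E0D scalerBr scalerA -rmorphM mulfV ?pnatr_eq0 //.
  rewrite rmorph1 scale1r (_ : (2 : R)%:C = 2%:R) ?rmorph_nat // scaler_nat mulr2n.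
  by rewrite opprD !addrA (addrAC y (- _)).
have sqd : forall n m, qf ipX (E0 (zs m) - E0 (zs n)) <= (4 * d + 2) * (eps n + eps m).
  move=> n m.
  have := paral (y - E0 (zs n)) (y - E0 (zs m)).
  rewrite mid (qfZ fl fh fp) subrACA subrr sub0r opprB.
  have hmid := dlb ((2^-1 : R)%:C *: (zs n + zs m)).
  have hq : d ^+ 2 <= qf ipX (y - E0 ((2^-1 : R)%:C *: (zs n + zs m))).
    by rewrite -nX_sq lerXn2r // nnegrE nX_ge0.
  have ha := Hzs n; have hb := Hzs m.
  have ha' : qf ipX (y - E0 (zs n)) <= (d + eps n) ^+ 2.
    by rewrite -nX_sq lerXn2r ?nnegrE ?nX_ge0 // ?addr_ge0 // ?ltW.
  have hb' : qf ipX (y - E0 (zs m)) <= (d + eps m) ^+ 2.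
    by rewrite -nX_sq lerXn2r ?nnegrE ?nX_ge0 // ?addr_ge0 // ?ltW.
  have e1 := eps1 n; have e2 := eps1 m; have e3 := eps0 n; have e4 := eps0 m.
  move: ha' hb' hq; set Qa := qf ipX _; set Qb := qf ipX _; set Qm := qf ipX _.
  move=> ha' hb' hq; rewrite /eps; set en := (n.+1%:R)^-1; set em := (m.+1%:R)^-1.
  move: e1 e2 e3 e4 ha' hb'; rewrite /eps -/en -/em => e1 e2 e3 e4 ha' hb' hpar.
  nra.
have cauchy : forall e : R, 0 < e -> exists N, forall m n, (N <= m)%N -> (N <= n)%N ->
    nX (E0 (zs m) - E0 (zs n)) < e.
  move=> e e0.
  have ee : 0 < e ^+ 2 by rewrite exprn_gt0.
  set N := Num.Def.archi_bound (2 * (4 * d + 2) / e ^+ 2).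
  have hN : 2 * (4 * d + 2) / e ^+ 2 < N%:R.
    by apply: archi_boundP; rewrite divr_ge0 ?mulr_ge0 // ?ltW //; lra.
  exists N => m n hm hn.
  apply: lt_of_sq; [exact: nX_ge0 | exact: e0 |].
  rewrite nX_sq; apply: le_lt_trans (sqd n m) _.
  have h1 := epsle _ _ hm; have h2 := epsle _ _ hn.
  have hNe : eps N * (N.+1%:R) = 1 by rewrite mulVf // pnatr_eq0.
  rewrite ltr_pdivrMr // in hN.
  have hN1 : (N%:R : R) <= N.+1%:R by rewrite ler_nat.
  have := eps0 N; move: hNe h1 h2 hN hN1; set eN := eps N; set Nr := (N%:R : R); set N1 := N.+1%:R.
  move=> hNe h1 h2 hN hN1 hep.
  have d4 : 0 <= 4 * d + 2 by lra.
  have : (4 * d + 2) * (eps n + eps m) <= (4 * d + 2) * (2 * eN).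
    by apply: ler_wpM2l => //; lra.
  nra.
have [l Hl] : exists l, forall e, 0 < e -> exists N, forall n, (N <= n)%N -> nX (E0 (zs n) - l) < e.
  by case: HX => _ _ _ _ hc; apply: hc.
have [zst Hzst] : exists z, E0 z = l.
  by apply: (HE0cl (u := fun n => E0 (zs n))) => // n; exists (zs n).
subst l.
set u := y - E0 zst.
have hu : nX u <= d.
  apply: le_of_eps => e e0.
  have e2 : 0 < e / 2 by rewrite divr_gt0.
  have [N1 HN1] := Hl _ e2.
  set N2 := Num.Def.archi_bound (2 / e).
  have hN2 : 2 / e < N2%:R by apply: archi_boundP; rewrite divr_ge0 // ltW.
  set n := maxn N1 N2.
  have h1 := HN1 n (leq_maxl _ _).
  have h2 := Hzs n.
  have h3 : eps n <= eps N2 by apply: epsle; rewrite leq_maxr.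
  have h4 : eps N2 < e / 2.
    rewrite /eps -[e / 2]invf_div ltf_pV2 ?posrE ?ltr0Sn ?divr_gt0 //.
    by apply: lt_le_trans hN2 _; rewrite ler_nat.
  rewrite /u; apply: le_trans (nX_triB HX _ (E0 (zs n)) _) _.
  move: h1 h2 h3 h4; rewrite /eps.
  set i1 := (n.+1%:R : R)^-1; set i2 := (N2.+1%:R : R)^-1; lra.
have orth : forall t : R, qf ipX u <= qf ipX (u - t%:C *: E0 u).
  move=> t; rewrite -!nX_sq lerXn2r ?nnegrE ?nX_ge0 //.
  apply: le_trans hu _.
  have -> : u - t%:C *: E0 u = y - E0 (zst + t%:C *: u).
    by rewrite E0D E0Z opprD addrA.
  exact: dlb.
set a := pE u ^+ 2.
set b := qf ipX (E0 u).
have b0 : 0 <= b by apply: (qf_ge0 fl fh fp).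
have a0 : 0 <= a by rewrite sqr_ge0.
have hexp : forall t : R, qf ipX (u - t%:C *: E0 u) = qf ipX u - 2 * t * a + t ^+ 2 * b.
  move=> t; rewrite (qfD fl fh fp) (qfN fl fh fp) (qfZ fl fh fp) (rfNr fl fh fp) (rfZr fl fh fp).
  rewrite /a pE_sq (rf_sym fl fh fp); ring.
have := orth (a / (b + 1)); rewrite hexp => h.
have a_eq : a = 0.
  have b1 : 0 < b + 1 by lra.
  have : 0 <= - 2 * (a / (b + 1)) * a + (a / (b + 1)) ^+ 2 * b by lra.
  have -> : - 2 * (a / (b + 1)) * a + (a / (b + 1)) ^+ 2 * b = - (a ^+ 2 * (b + 2)) / (b + 1) ^+ 2.
    by field; lra.
  rewrite pmulr_lge0 ?invr_gt0 ?exprn_gt0 // oppr_ge0 => h2.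
  have : a ^+ 2 * (b + 2) = 0.
    by apply/eqP; rewrite eq_le h2 mulr_ge0 ?sqr_ge0 //; lra.
  move/eqP; rewrite mulf_eq0 sqrf_eq0 => /orP[/eqP //|/eqP]; lra.
have pu : pE u = 0 by move: a_eq; rewrite /a => /eqP; rewrite sqrf_eq0 => /eqP.
have u0 := hk _ (pE_eq0 pu).
by exists zst; move/eqP: u0; rewrite subr_eq0 => /eqP.
Qed.

Hypothesis HY : is_hilbert ipY.
Hypothesis HGs : forall y, exists x, D x /\ G x = y.
Hypothesis Hl0 : exists l0 : R, w < l0 /\
     forall z, exists x, [/\ D x, G x = 0 & l0%:C *: E0 x - A0 x = z].

Definition EE := fun x : X => (E0 x, 0 : Y).
Definition AA := fun x : X => (A0 x, G x).

Lemma pairE (l : C) x : l *: EE x - AA x = (l *: E0 x - A0 x, - G x).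
Proof.
have -> : l *: EE x - AA x = (l *: E0 x - A0 x, l *: (0 : Y) - G x) by [].
by rewrite scaler0 sub0r.
Qed.
Lemma pairE' (l : C) x : AA x - l *: EE x = (A0 x - l *: E0 x, G x).
Proof.
have -> : AA x - l *: EE x = (A0 x - l *: E0 x, G x - l *: (0 : Y)) by [].
by rewrite scaler0 subr0.
Qed.

Lemma Surj_all l : w < l -> Surj l.
Proof.
have [l0 [wl0 H0]] := Hl0.
apply: (surj_all wl0) => z.
by have [x [Dx Gx Lx]] := H0 z; exists x.
Qed.

Lemma in_rho_all l : w < l -> in_rho D EE AA l%:C.
Proof.
move=> wl; split.
  move=> [z1 z2].
  have [x1 [Dx1 Gx1]] := HGs (- z2).
  have [x0 [[Dx0 Gx0] Lx0]] := Surj_all wl (z1 - L l x1).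
  exists (x0 + x1); split; first exact: DD.
  rewrite pairE; congr pair.
    by have := LD l Dx0 Dx1; rewrite /L => ->; rewrite -/(L l x0) -/(L l x1) Lx0 subrK.
  by rewrite (FD HG) // Gx0 Gx1 add0r opprK.
move=> x1 x2 Dx1 Dx2; rewrite !pairE => [[hL hG]].
have K12 : Kset (x1 - x2).
  split; first exact: DB.
  by rewrite (FB HG) // -(opprK (G x1)) hG opprK subrr.
have := inj_L wl K12.
rewrite LB // /L hL subrr => /(_ erefl) /eqP.
by rewrite subr_eq0 => /eqP.
Qed.

Lemma arith (a b K l : R) : 0 <= a -> 0 <= b -> 0 <= K -> w + 1 < l ->
  (l - w) * a <= K * b -> a <= (K + 1) / (l - (w + 1)) * b.
Proof.
move=> a0 b0 K0 hl h.
have dp : 0 < l - (w + 1) by rewrite subr_gt0.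
rewrite mulrAC ler_pdivlMr //.
move: h dp; set d := l - (w + 1) => h dp.
have : l - w = d + 1 by rewrite /d; ring.
move=> e; rewrite e in h.
nra.
Qed.

Lemma hnormY0 : hnorm ipY 0 = 0.
Proof. case: HY => fl' fh' fp' _ _; exact: (nf0 fl' fh' fp'). Qed.

Lemma znormE x : znorm ipX ipY (EE x) = nX (E0 x).
Proof.
by rewrite /znorm /EE /= hnormY0 expr0n /= addr0 sqrtr_sqr ger0_norm // nX_ge0.
Qed.

Lemma part2 : cond_D (znorm ipX ipY) (in_rho D EE AA) (Rl_graph D EE AA) 2.
Proof.
have [k1 [k10 Hk1]] := K1.
have [k2 [k20 Hk2]] := CR.
exists (w + 1), (k1 * k2 + 1); split; first by rewrite ltr_wpDl // mulr_ge0.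
split.
  by move=> l hl; apply: in_rho_all; apply: lt_le_trans hl; rewrite ltrDl.
move=> l hl v /= [u [_ [x' [Dx' _ ->]]]] wv [x [Dx hx ->]].
rewrite !znormE.
rewrite pairE' /EE in hx; case: hx => hA hGx.
have wl : w < l by apply: lt_trans hl; rewrite ltrDl.
have hL : L l x = E0 (- x').
  by rewrite E0N -hA /L opprB.
have := key wl (conj Dx hGx) hL; rewrite pEN => h.
apply: arith; [exact: nX_ge0 | exact: nX_ge0 | by rewrite mulr_ge0 | done |].
apply: le_trans (_ : (l - w) * (k1 * pE x) <= _).
  by apply: ler_wpM2l; [rewrite subr_ge0 ltW | apply: Hk1].
have := Hk2 x'; have := pE_ge0 x; have := pE_ge0 x'.
have : 0 <= l - w by rewrite subr_ge0 ltW.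
nra.
Qed.

Lemma nX_le_pE : (forall x, E0 x = 0 -> x = 0) ->
  exists k : R, 0 <= k /\ forall y, nX y <= k * pE y.
Proof.
move=> hk.
have [k2 [k20 Hk2]] := CR.
exists k2; split => // y.
have [z hz] := E0_onto hk y.
have h : nX y ^+ 2 <= pE y * (k2 * nX y).
  rewrite nX_sq; apply: le_trans (_ : pE y * pE z <= _).
    have -> : qf ipX y = rf ipX (E0 y) z by rewrite /qf /rf HE0sa hz.
    exact: pE_CS.
  by rewrite ler_wpM2l ?pE_ge0 // -hz.
have [n0|n0] := eqVneq (nX y) 0; first by rewrite n0 mulr_ge0 ?pE_ge0.
have np : 0 < nX y by rewrite lt_def n0 nX_ge0.
rewrite expr2 mulrA ler_pM2r // in h.
by rewrite mulrC.
Qed.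

Lemma part3 : (forall x, E0 x = 0 -> x = 0) ->
  cond_D nX (in_rho D EE AA) (Rr_graph D EE AA) 1.
Proof.
move=> hk.
have [k3 [k30 Hk3]] := nX_le_pE hk.
have [kp [kp0 Hkp]] := pE_le.
exists (w + 1), (k3 * kp + 1); split; first by rewrite ltr_wpDl // mulr_ge0.
split.
  by move=> l hl; apply: in_rho_all; apply: lt_le_trans hl; rewrite ltrDl.
move=> l hl v _ wv [Dwv hx].
rewrite pairE' /EE in hx; case: hx => hA hGx.
have wl : w < l by apply: lt_trans hl; rewrite ltrDl.
have hL : L l wv = E0 (- v).
  by rewrite E0N -hA /L opprB.
have := key wl (conj Dwv hGx) hL; rewrite pEN => h.
apply: arith; [exact: nX_ge0 | exact: nX_ge0 | by rewrite mulr_ge0 | done |].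
apply: le_trans (_ : (l - w) * (k3 * pE wv) <= _).
  by apply: ler_wpM2l; [rewrite subr_ge0 ltW | apply: Hk3].
have := Hkp v; have := pE_ge0 wv; have := pE_ge0 v.
have : 0 <= l - w by rewrite subr_ge0 ltW.
nra.
Qed.
End Main.

Unset Implicit Arguments.
Theorem mainTheorem9 (R : realType) (X Y : lmodType R[i])
  (ipX : X -> X -> R[i]) (ipY : Y -> Y -> R[i])
  (E0 : X -> X) (D : X -> Prop) (A0 : X -> X) (G : X -> Y) (w : R) :
  is_hilbert ipX -> is_hilbert ipY ->
  linear_on (fun _ => True) E0 ->
  (exists c : R, forall x, hnorm ipX (E0 x) <= c * hnorm ipX x) ->
  (forall x y, ipX (E0 x) y = ipX x (E0 y)) ->
  (forall x, 0 <= ipX (E0 x) x) ->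
  hclosed ipX (fun y => exists x, E0 x = y) ->
  subspace D -> linear_on D A0 ->
  linear_on D G ->
  (exists c : R, forall x, D x ->
     hnorm ipY (G x) <= c * Num.sqrt (hnorm ipX x ^+ 2 + hnorm ipX (A0 x) ^+ 2)) ->
  (forall y, exists x, D x /\ G x = y) ->
  (forall x, D x -> G x = 0 ->
     complex.Re (ipX (A0 x - w%:C *: E0 x) x) <= 0) ->
  (exists l0 : R, w < l0 /\
     forall z, exists x, [/\ D x, G x = 0 & l0%:C *: E0 x - A0 x = z]) ->
  (forall x, D x -> E0 x = 0 -> A0 x = 0 -> G x = 0 -> x = 0) ->
  let E := fun x : X => (E0 x, 0 : Y) in
  let A := fun x : X => (A0 x, G x) in
  [/\ (forall l : R, w < l -> in_rho D E A l%:C),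
      cond_D (znorm ipX ipY) (in_rho D E A) (Rl_graph D E A) 2 &
      ((forall x, E0 x = 0 -> x = 0) ->
        cond_D (hnorm ipX) (in_rho D E A) (Rr_graph D E A) 1)].
Proof.
move=> HX HY HE0lin HE0b HE0sa HE0pos HE0cl HD HA0 HG _ HGs Hdiss Hl0 Hker E A.
split.
- move=> l wl.
  exact: (in_rho_all HX HE0lin HE0b HE0sa HE0pos HE0cl HD HA0 HG Hdiss Hker HGs Hl0 wl).
- exact: (part2 HX HE0lin HE0b HE0sa HE0pos HE0cl HD HA0 HG Hdiss Hker HY HGs Hl0).
- move=> hk.
  exact: (part3 HX HE0lin HE0b HE0sa HE0pos HE0cl HD HA0 HG Hdiss Hker HGs Hl0 hk).
Qed.
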